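(* Let $p\ge1$, let $\bm A\in\mathbb{R}^{m\times d}$, $\bm B\in\mathbb{R}^{n\times d}$ and $\bm V\in\mathbb{R}^{d\times k}$. Then \[d^p_{\mathrm{ERP}}(\bm A\bm V,\bm B\bm V)\le d^p_{\mathrm{ERP}}(\bm A,\bm B)\,\|\bm V\|_p.\] Moreover, if $\bm A,\bm B$ are sequences of one-hot vectors, then \[d^p_{\mathrm{ERP}}(\bm A\bm V,\bm B\bm V)\le d_{\mathrm{Lev}}(\bm A,\bm B)\cdot M(\bm V),\qquad M(\bm V)=\max\Big\{\max_{i\in\{1,\dots,d\}}\|\bm v_i\|_p,\ \max_{i,j\in\{1,\dots,d\}}\|\bm v_i-\bm v_j\|_p\Big\},\] where $\bm v_i$ is the $i$-th row of $\bm V$.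
   Context: $\bm A\bm V$ is the sequence with rows $\bm a_i\bm V$ (row vector times matrix), and $\|\bm V\|_p$ is the operator norm of $\bm x\mapsto\bm x\bm V$ induced by the $\ell_p$ norm. The ERP distance is defined recursively: $d^p_{\mathrm{ERP}}(\bm A,\emptyset)=\sum_{i}\|\bm a_i\|_p$, $d^p_{\mathrm{ERP}}(\emptyset,\bm B)=\sum_{i}\|\bm b_i\|_p$, and otherwise $d^p_{\mathrm{ERP}}(\bm A,\bm B)=\min\{\|\bm a_1\|_p+d^p_{\mathrm{ERP}}(\bm A_{2:},\bm B),\ \|\bm b_1\|_p+d^p_{\mathrm{ERP}}(\bm A,\bm B_{2:}),\ \|\bm a_1-\bm b_1\|_p+d^p_{\mathrm{ERP}}(\bm A_{2:},\bm B_{2:})\}$ ($\emptyset$ the empty sequence, $\bm A_{2:}$ removes the first row). One-hot vectors are vectors in $\{0,1\}^d$ with exactly one entry equal to $1$; $d_{\mathrm{Lev}}$ is the Levenshtein distance (minimum number of single-element insertions, deletions and substitutions). *)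

(* Defs.v *)
From HB Require Import structures.
From mathcomp Require Import all_boot all_order all_algebra.
From mathcomp Require Import classical_sets reals exp.
Set Implicit Arguments. Unset Strict Implicit. Unset Printing Implicit Defensive.
Import Order.TTheory GRing.Theory Num.Theory.
Local Open Scope ring_scope.
Local Open Scope classical_set_scope.

Section Defs.
Variable R : realType.

Definition lpnorm (p : R) {d : nat} (x : 'rV[R]_d) : R :=
  powR (\sum_(i < d) powR `|x 0 i| p) p^-1.

Definition opnorm (p : R) {d k : nat} (V : 'M[R]_(d, k)) : R :=
  sup [set lpnorm p (x *m V) | x in [set x : 'rV[R]_d | lpnorm p x <= 1]].

Definition rows {m d : nat} (A : 'M[R]_(m, d)) : seq 'rV[R]_d :=
  [seq row i A | i <- enum 'I_m].

Fixpoint erp (p : R) {d : nat} (A : seq 'rV[R]_d) : seq 'rV[R]_d -> R :=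
  match A with
  | [::] => fun B => \sum_(b <- B) lpnorm p b
  | a :: A' =>
      fix erpA (B : seq 'rV[R]_d) : R :=
        match B with
        | [::] => \sum_(x <- A) lpnorm p x
        | b :: B' =>
            Num.min (lpnorm p a + erp p A' B)
              (Num.min (lpnorm p b + erpA B') (lpnorm p (a - b) + erp p A' B'))
        end
  end.

Definition onehot {d : nat} (x : 'rV[R]_d) : bool :=
  [forall i, (x 0 i == 0) || (x 0 i == 1)] && (#|[set i | x 0 i == 1]| == 1%N).

Definition MV (p : R) {d k : nat} (V : 'M[R]_(d, k)) : R :=
  Num.max (\big[Num.max/0]_(i < d) lpnorm p (row i V))
          (\big[Num.max/0]_(i < d) \big[Num.max/0]_(j < d) lpnorm p (row i V - row j V)).

End Defs.

Fixpoint lev {T : eqType} (A : seq T) : seq T -> nat :=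
  match A with
  | [::] => fun B => size B
  | a :: A' =>
      fix levA (B : seq T) : nat :=
        match B with
        | [::] => size A
        | b :: B' => minn (lev A' B).+1 (minn (levA B').+1 (lev A' B' + (a != b)))
        end
  end.

(* Main.v *)
Require Import Defs.
From HB Require Import structures.
From mathcomp Require Import all_boot all_order all_algebra.
From mathcomp Require Import classical_sets reals exp.
Import Order.TTheory GRing.Theory Num.Theory.
Local Open Scope ring_scope.

Section Lp.
Variable R : realType.
Variable p : R.
Hypothesis p1 : 1 <= p.

Let p0 : 0 < p. Proof. exact: lt_le_trans ltr01 p1. Qed.
Let pn0 : p != 0. Proof. by rewrite gt_eqF. Qed.
Let pi0 : p^-1 != 0. Proof. by rewrite invr_eq0. Qed.
Let pi_ge0 : 0 <= p^-1. Proof. by rewrite invr_ge0 ltW. Qed.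

Lemma powK (x : R) : 0 <= x -> (x `^ p) `^ p^-1 = x.
Proof. by move=> x0; rewrite -powRrM mulfV // powRr1. Qed.

Lemma lpnorm_ge0 d (x : 'rV[R]_d) : 0 <= lpnorm p x.
Proof. exact: powR_ge0. Qed.

Lemma lpnorm_scale d (c : R) (x : 'rV[R]_d) : 0 <= c ->
  lpnorm p (c *: x) = c * lpnorm p x.
Proof.
move=> c0; rewrite /lpnorm.
under eq_bigr => i _ do rewrite mxE normrM (ger0_norm c0) powRM //.
rewrite -mulr_sumr powRM ?powR_ge0 ?sumr_ge0 // => [|i _]; last exact: powR_ge0.
by rewrite powK.
Qed.

Lemma lpnorm0 d : lpnorm p (0 : 'rV[R]_d) = 0.
Proof.
have -> : (0 : 'rV[R]_d) = 0 *: 0 by rewrite scale0r.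
by rewrite lpnorm_scale // mul0r.
Qed.

Lemma lpnorm_coord d (x : 'rV[R]_d) i : `|x 0 i| <= lpnorm p x.
Proof.
rewrite -[X in X <= _](@powK _ (normr_ge0 _)) /lpnorm.
apply: ge0_ler_powR => //; rewrite ?nnegrE ?powR_ge0 ?sumr_ge0 //.
  by move=> j _; exact: powR_ge0.
rewrite (bigD1 i) //= lerDl sumr_ge0 // => j _; exact: powR_ge0.
Qed.

Lemma lpnorm_eq0 d (x : 'rV[R]_d) : lpnorm p x = 0 -> x = 0.
Proof.
move=> H; apply/rowP => i; rewrite mxE; apply/eqP; rewrite -normr_le0.
by rewrite -H lpnorm_coord.
Qed.

Section Op.
Variables d k : nat.
Variable V : 'M[R]_(d, k).

Local Open Scope classical_set_scope.
Let S := [set lpnorm p (x *m V) | x in [set x : 'rV[R]_d | lpnorm p x <= 1]].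

Lemma S_ub : has_ubound S.
Proof.
exists ((\sum_(j < k) (\sum_(i < d) `|V i j|) `^ p) `^ p^-1).
move=> y [x /= Hx <-]; rewrite /lpnorm.
apply: ge0_ler_powR => //; rewrite ?nnegrE ?sumr_ge0 //.
- by move=> j _; exact: powR_ge0.
- by move=> j _; exact: powR_ge0.
apply: ler_sum => j _; apply: ge0_ler_powR; rewrite ?nnegrE ?sumr_ge0 //; first exact: ltW.
rewrite mxE; apply: le_trans (ler_norm_sum _ _ _) _.
apply: ler_sum => i _; rewrite normrM -[X in _ <= X]mul1r ler_wpM2r //.
exact: le_trans (lpnorm_coord _ x i) Hx.
Qed.

Lemma opnorm_ub (x : 'rV[R]_d) : lpnorm p x <= 1 -> lpnorm p (x *m V) <= opnorm p V.
Proof. by move=> Hx; apply: ub_le_sup S_ub _ _; exists x. Qed.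

Lemma opnorm_ge0 : 0 <= opnorm p V.
Proof. by rewrite -(lpnorm0 k) -(mul0mx _ V) opnorm_ub // lpnorm0. Qed.

Lemma opnorm_le (x : 'rV[R]_d) : lpnorm p (x *m V) <= lpnorm p x * opnorm p V.
Proof.
have [/lpnorm_eq0 ->|] := eqVneq (lpnorm p x) 0.
  by rewrite mul0mx lpnorm0 lpnorm0 mul0r.
move=> Ln0; have L0 : 0 < lpnorm p x by rewrite lt_def Ln0 lpnorm_ge0.
have := @opnorm_ub ((lpnorm p x)^-1 *: x).
have Li : 0 <= (lpnorm p x)^-1 by rewrite invr_ge0 ltW.
rewrite -scalemxAl !lpnorm_scale // mulVf // lexx => /(_ isT).
by rewrite ler_pdivrMl.
Qed.

End Op.
End Lp.
Section Erp.
Variable R : realType.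
Variable p : R.
Variables d k : nat.
Implicit Types (s t : seq 'rV[R]_d).

Lemma erp_nil e (t : seq 'rV[R]_e) : erp p [::] t = \sum_(b <- t) lpnorm p b.
Proof. by []. Qed.
Lemma erp_nil2 e (a : 'rV[R]_e) (s : seq 'rV[R]_e) : erp p (a :: s) [::] = \sum_(x <- a :: s) lpnorm p x.
Proof. by []. Qed.
Lemma erp_cons e (a b : 'rV[R]_e) (s t : seq 'rV[R]_e) : erp p (a :: s) (b :: t) =
  Num.min (lpnorm p a + erp p s (b :: t))
    (Num.min (lpnorm p b + erp p (a :: s) t) (lpnorm p (a - b) + erp p s t)).
Proof. by []. Qed.

Lemma sum_map_le (f : 'rV[R]_d -> 'rV[R]_k) c t :
  (forall a, lpnorm p (f a) <= lpnorm p a * c) ->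
  \sum_(b <- map f t) lpnorm p b <= (\sum_(b <- t) lpnorm p b) * c.
Proof.
move=> H; rewrite big_map mulr_suml; exact: ler_sum.
Qed.

Lemma erp_map_le (f : 'rV[R]_d -> 'rV[R]_k) c :
  0 <= c ->
  (forall a, lpnorm p (f a) <= lpnorm p a * c) ->
  (forall a b, f a - f b = f (a - b)) ->
  forall s t, erp p (map f s) (map f t) <= erp p s t * c.
Proof.
move=> c0 H Hl; elim=> [|a s IH] t.
  by rewrite [map f [::]]/= !erp_nil; apply: sum_map_le.
elim: t => [|b t IHt].
  rewrite [map f [::]]/= [map f (a :: s)]/= !erp_nil2.
  exact: (@sum_map_le f c (a :: s) H).
rewrite [map f (a :: s)]/= [map f (b :: t)]/= erp_cons erp_cons !minr_pMl // !mulrDl.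
apply: le_min2; first by apply: lerD => //; exact: (IH (b :: t)).
apply: le_min2; first by apply: lerD.
by rewrite Hl; apply: lerD.
Qed.

Lemma sum_map_le2 (f : 'rV[R]_d -> 'rV[R]_k) (P : pred 'rV[R]_d) M t :
  all P t -> (forall a, P a -> lpnorm p (f a) <= M) ->
  \sum_(b <- map f t) lpnorm p b <= (size t)%:R * M.
Proof.
move=> Ht H; elim: t Ht => [|a t IH] /=; first by rewrite big_nil mul0r.
case/andP=> Pa Pt; rewrite big_cons -natr1 mulrDl mul1r [X in _ <= X]addrC.
by apply: lerD; [exact: H | exact: IH].
Qed.

Lemma erp_lev_le (f : 'rV[R]_d -> 'rV[R]_k) (P : pred 'rV[R]_d) M :
  (forall a, P a -> lpnorm p (f a) <= M) ->
  (forall a b, P a -> P b -> lpnorm p (f a - f b) <= (a != b)%:R * M) ->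
  forall s t, all P s -> all P t ->
  erp p (map f s) (map f t) <= (lev s t)%:R * M.
Proof.
move=> H1 H2; elim=> [|a s IH] t Ps Pt.
  by rewrite [map f [::]]/= erp_nil; apply: sum_map_le2 Pt H1.
elim: t Pt => [|b t IHt] Pt.
  rewrite [map f [::]]/= [map f (a :: s)]/= erp_nil2.
  exact: (@sum_map_le2 f P M (a :: s) Ps H1).
move: Ps Pt => /[dup] Ps /andP[Pa Ps'] /[dup] Pt /andP[Pb Pt'].
rewrite [map f (a :: s)]/= [map f (b :: t)]/= erp_cons.
have E1 : erp p (f a :: map f s) (f b :: map f t) <= (lev s (b :: t)).+1%:R * M.
  rewrite -natr1 mulrDl mul1r [X in _ <= X]addrC ge_min; apply/orP; left.
  by apply: lerD; [apply: H1 | apply: (IH (b :: t))].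
have E2 : erp p (f a :: map f s) (f b :: map f t) <= (lev (a :: s) t).+1%:R * M.
  rewrite -natr1 mulrDl mul1r [X in _ <= X]addrC erp_cons ge_min; apply/orP; right.
  rewrite ge_min; apply/orP; left.
  by apply: lerD; [apply: H1 | apply: IHt].
have E3 : erp p (f a :: map f s) (f b :: map f t) <= (lev s t + (a != b))%:R * M.
  rewrite natrD mulrDl addrC erp_cons ge_min; apply/orP; right.
  rewrite ge_min; apply/orP; right.
  by apply: lerD; [apply: H2 | apply: IH].
rewrite erp_cons in E1 E2 E3.
have -> : lev (a :: s) (b :: t) = minn (lev s (b :: t)).+1
   (minn (lev (a :: s) t).+1 (lev s t + (a != b))) by [].
rewrite /minn; case: ltnP => _ //; case: ltnP => _ //.
Qed.

End Erp.

Lemma onehotP (R : realType) d (x : 'rV[R]_d) : onehot x -> exists j, x = 'e_j.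
Proof.
case/andP=> /forallP H.
move=> Hc.
have /cards1P [j Hj] : #|[set i | x 0 i == 1]| == 1%N.
  suff -> : #|[set i | x 0 i == 1]| = #|[set i | x 0 i == 1]%classic| by [].
  by apply: eq_card => i; rewrite !inE /=; apply/idP/idP => [h|/set_mem //]; apply: mem_set.
exists j; apply/rowP => l.
have Hin : (x 0 l == 1) = (l == j).
  by have := congr1 (fun S : {set 'I_d} => l \in S) Hj; rewrite /= !inE.
rewrite /delta_mx !mxE eqxx /=.
case: (l == j) Hin => /= Hin; first by apply/eqP; rewrite Hin.
by have := H l; rewrite Hin orbF => /eqP.
Qed.

Lemma rowsM (R : realType) m d k (A : 'M[R]_(m, d)) (V : 'M[R]_(d, k)) :
  rows (A *m V) = map (fun r => r *m V) (rows A).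
Proof. by rewrite /rows; elim: (enum _) => //= i s ->; rewrite row_mul. Qed.

Theorem lemma4 (R : realType) (p : R) (m n d k : nat)
    (A : 'M[R]_(m, d)) (B : 'M[R]_(n, d)) (V : 'M[R]_(d, k)) :
  1 <= p ->
  erp p (rows (A *m V)) (rows (B *m V)) <= erp p (rows A) (rows B) * opnorm p V /\
  ((forall i, onehot (row i A)) -> (forall j, onehot (row j B)) ->
   erp p (rows (A *m V)) (rows (B *m V)) <= (lev (rows A) (rows B))%:R * MV p V).
Proof.
move=> p1; rewrite !rowsM; split.
  apply: erp_map_le; first exact: opnorm_ge0.
    by move=> a; exact: opnorm_le.
  by move=> a b; rewrite mulmxBl.
move=> HA HB.
apply: (@erp_lev_le R p d k _ (fun x => onehot x)).
- move=> a /onehotP [j ->]; rewrite -rowE /MV.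
  rewrite le_max; apply/orP; left.
  exact: (le_bigmax 0 (fun i => lpnorm p (row i V)) j).
- move=> a b /onehotP [i ->] /onehotP [j ->].
  have [->|neq] := eqVneq ('e_i : 'rV[R]_d) 'e_j.
    by rewrite subrr lpnorm0 // mul0r.
  rewrite mul1r -!rowE /MV le_max; apply/orP; right.
  apply: le_trans (le_bigmax 0 (fun i => \big[Num.max/0]_(j < d) lpnorm p (row i V - row j V)) i).
  exact: (le_bigmax 0 (fun j => lpnorm p (row i V - row j V)) j).
- by apply/allP => x /mapP [i _ ->].
- by apply/allP => x /mapP [i _ ->].
Qed.
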